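(* The $1$-matching complex $M_1(G)$ of any finite fully whiskered graph $G$ is vertex decomposable.
   Context: A fully whiskered graph is a finite simple graph in which every vertex that is not a leaf (degree $\neq 1$) is adjacent to at least one leaf vertex. The $1$-matching complex $M_1(G)$ is the simplicial complex whose simplices are the sets $\sigma\subseteq E(G)$ of pairwise non-adjacent edges (matchings), i.e. every vertex of $G$ is incident to at most one edge of $\sigma$. For a simplicial complex $K$ and a vertex $v$, $\mathrm{lk}(v,K)=\{\tau\in K: v\notin\tau,\ \tau\cup\{v\}\in K\}$ and $\mathrm{del}(v,K)=\{\tau\in K: v\notin\tau\}$. A simplicial complex $K$ is vertex decomposable if $K$ is a simplex (the set of all subsets of a finite set, including $\{\emptyset\}$), or $K$ contains a vertex $v$ such that (i) both $\mathrm{lk}(v,K)$ and $\mathrm{del}(v,K)$ are vertex decomposable, and (ii) every facet (maximal simplex) of $\mathrm{del}(v,K)$ is a facet of $K$. *)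

(* Defs.v *)
From mathcomp Require Import all_boot.
Set Implicit Arguments. Unset Strict Implicit. Unset Printing Implicit Defensive.

Definition simple_graph (T : finType) (g : rel T) : Prop :=
  symmetric g /\ irreflexive g.

Definition degree (T : finType) (g : rel T) (x : T) : nat := #|[set y | g x y]|.

Definition is_leaf (T : finType) (g : rel T) (x : T) : bool := degree g x == 1.

Definition fully_whiskered (T : finType) (g : rel T) : Prop :=
  forall x : T, degree g x != 1 -> exists y : T, g x y && is_leaf g y.

Definition is_edge (T : finType) (g : rel T) (e : {set T}) : bool :=
  [exists x, exists y, g x y && (e == [set x; y])].

Definition lk (V : finType) (v : V) (K : {set {set V}}) : {set {set V}} :=
  [set t in K | (v \notin t) && (v |: t \in K)].

Definition del (V : finType) (v : V) (K : {set {set V}}) : {set {set V}} :=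
  [set t in K | v \notin t].

Definition is_facet (V : finType) (K : {set {set V}}) (s : {set V}) : bool :=
  (s \in K) && [forall t in K, (s \subset t) ==> (t == s)].

(* a simplex: the set of all subsets of a finite set A (A = set0 gives {∅}) *)
Definition is_simplex (V : finType) (K : {set {set V}}) : Prop :=
  exists A : {set V}, K = powerset A.

Inductive vertex_decomposable (V : finType) : {set {set V}} -> Prop :=
  | vd_simplex (K : {set {set V}}) : is_simplex K -> vertex_decomposable K
  | vd_shed (K : {set {set V}}) (v : V) :
      [set v] \in K ->
      vertex_decomposable (lk v K) ->
      vertex_decomposable (del v K) ->
      (forall s, is_facet (del v K) s -> is_facet K s) ->
      vertex_decomposable K.

Definition matching_complex (T : finType) (g : rel T) : {set {set {set T}}} :=
  [set s : {set {set T}} |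
    [forall e in s, is_edge g e] &&
    [forall x : T, #|[set e in s | x \in e]| <= 1]].

(* Main.v *)
Require Import Defs.
From mathcomp Require Import all_boot.
Set Implicit Arguments. Unset Strict Implicit. Unset Printing Implicit Defensive.

Lemma inM (T : finType) (g : rel T) s :
  s \in matching_complex g <->
  (forall e, e \in s -> is_edge g e) /\
  (forall z e1 e2, e1 \in s -> e2 \in s -> z \in e1 -> z \in e2 -> e1 = e2).
Proof.
rewrite inE; split.
  case/andP=> /forall_inP H1 /forallP H2; split => // z e1 e2 h1 h2 z1 z2.
  have := H2 z => /card_le1_eqP; apply; by rewrite inE ?h1 ?h2 ?z1 ?z2.
case=> H1 H2; apply/andP; split; first by apply/forall_inP.
apply/forallP => z; apply/card_le1_eqP => e1 e2; rewrite !inE.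
case/andP=> h1 z1 /andP [h2 z2]; exact: (H2 z e2 e1).
Qed.

Lemma set2_eq (T : finType) (a b x y : T) : a != b ->
  ([set a; b] == [set x; y]) = ((a==x)&&(b==y) || (a==y)&&(b==x)).
Proof.
move=> ab; apply/eqP/idP.
  move=> E.
  have ha : a \in [set x; y] by rewrite -E !inE eqxx.
  have hb : b \in [set x; y] by rewrite -E !inE eqxx orbT.
  have hx : x \in [set a; b] by rewrite E !inE eqxx.
  have hy : y \in [set a; b] by rewrite E !inE eqxx orbT.
  move: ha hb hx hy ab; rewrite !inE.
  by case/orP=> /eqP-> ; case/orP=> /eqP->; rewrite ?eqxx //= ?orbT.
by case/orP=> /andP[/eqP-> /eqP->] //; rewrite setUC.
Qed.

Lemma edge_at (T : finType) (g : rel T) e z : symmetric g ->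
  is_edge g e -> z \in e -> exists y, g z y /\ e = [set z; y].
Proof.
move=> sym /existsP[a /existsP[b /andP[gab /eqP E]]]; rewrite E !inE.
case/orP=> /eqP->; first by exists b.
by exists a; rewrite sym setUC.
Qed.

Lemma edge_of (T : finType) (g : rel T) a b : g a b -> is_edge g [set a; b].
Proof. by move=> h; apply/existsP; exists a; apply/existsP; exists b; rewrite h eqxx. Qed.

Definition gdel (T : finType) (g : rel T) (x w : T) : rel T :=
  fun a b => g a b && ~~ ((a==x)&&(b==w) || (a==w)&&(b==x)).
Definition glk (T : finType) (g : rel T) (x w : T) : rel T :=
  fun a b => [&& g a b, a \notin [set x; w] & b \notin [set x; w]].

Lemma leaf_uniq (T : finType) (g : rel T) l a b :
  is_leaf g l -> g l a -> g l b -> a = b.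
Proof.
move=> /eqP H ha hb.
have : #|[set y | g l y]| <= 1 by rewrite -/(degree g l) H.
by move/card_le1_eqP; apply; rewrite inE.
Qed.

Lemma edge_del (T : finType) (g : rel T) x w e : irreflexive g -> x != w ->
  is_edge (gdel g x w) e = is_edge g e && (e != [set x; w]).
Proof.
move=> irr xw; apply/idP/andP.
  case/existsP=> a /existsP[b /andP[/andP[gab nab] /eqP E]].
  have ab : a != b by apply: contraTneq gab => ->; rewrite irr.
  by rewrite E set2_eq // nab (edge_of gab).
case=> /existsP[a /existsP[b /andP[gab /eqP E]]] ne.
have ab : a != b by apply: contraTneq gab => ->; rewrite irr.
apply/existsP; exists a; apply/existsP; exists b.
by rewrite /gdel gab -set2_eq // -E ne E eqxx.
Qed.

Lemma del_eq (T : finType) (g : rel T) x w : irreflexive g -> x != w ->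
  del [set x; w] (matching_complex g) = matching_complex (gdel g x w).
Proof.
move=> irr xw; apply/setP => s; rewrite [in LHS]inE.
apply/andP/idP.
  case=> /inM [H1 H2] ns; apply/inM; split => // e es.
  rewrite edge_del // H1 //=; by apply: contraNneq ns => <-.
move/inM=> [H1 H2]; split.
  apply/inM; split => // e es; by have := H1 e es; rewrite edge_del // => /andP[].
apply/negP => fs; have := H1 _ fs; by rewrite edge_del // eqxx andbF.
Qed.

Lemma edge_lk (T : finType) (g : rel T) x w e :
  is_edge (glk g x w) e -> [/\ is_edge g e, x \notin e & w \notin e].
Proof.
case/existsP=> a /existsP[b /andP[/and3P[gab na nb] /eqP E]].
move: na nb; rewrite !inE !negb_or => /andP[ax aw] /andP[bx bw].
by rewrite E (edge_of gab) !inE !negb_or !(eq_sym x) !(eq_sym w) ax aw bx bw.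
Qed.

Lemma edge_lk' (T : finType) (g : rel T) x w e :
  is_edge g e -> x \notin e -> w \notin e -> is_edge (glk g x w) e.
Proof.
case/existsP=> a /existsP[b /andP[gab /eqP E]]; rewrite E !inE !negb_or.
move=> /andP[xa xb] /andP[wa wb].
apply/existsP; exists a; apply/existsP; exists b.
by rewrite /glk gab !inE !negb_or !(eq_sym a) !(eq_sym b) xa xb wa wb eqxx.
Qed.

Lemma lk_eq (T : finType) (g : rel T) x w : g x w ->
  lk [set x; w] (matching_complex g) = matching_complex (glk g x w).
Proof.
move=> gxw; apply/setP => s; rewrite [in LHS]inE.
apply/and3P/idP.
  case=> /inM [H1 H2] ns /inM [H3 H4]; apply/inM; split => // e es.
  apply: edge_lk' => //; first exact: H1.
    apply/negP => xe; have E : e = [set x; w].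
      by apply: (H4 x); rewrite ?inE ?eqxx ?es ?xe ?orbT.
    by move: ns; rewrite -E es.
  apply/negP => xe; have E : e = [set x; w].
    by apply: (H4 w); rewrite ?inE ?eqxx ?es ?xe ?orbT.
  by move: ns; rewrite -E es.
move/inM=> [H1 H2].
have av : forall e, e \in s -> x \notin e /\ w \notin e.
  by move=> e /H1 /edge_lk [].
split.
- apply/inM; split => // e es; by case/edge_lk: (H1 e es).
- apply/negP => fs; by case: (av _ fs); rewrite !inE eqxx.
- apply/inM; split.
    move=> e; rewrite !inE => /orP[/eqP->|es]; first exact: edge_of.
    by case/edge_lk: (H1 e es).
  move=> z e1 e2; rewrite !inE => /orP[/eqP->|e1s] /orP[/eqP->|e2s] //.
  + move=> zf ze; case: (av _ e2s) => ax aw.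
    by move: zf; rewrite !inE => /orP[] /eqP zx; move: ax aw; rewrite -zx ze.
  + move=> ze zf; case: (av _ e1s) => ax aw.
    by move: zf; rewrite !inE => /orP[] /eqP zx; move: ax aw; rewrite -zx ze.
  + exact: H2.
Qed.

Lemma facet_ok (T : finType) (g : rel T) x w l :
  symmetric g -> irreflexive g -> g x w -> g x l -> is_leaf g l -> l != w ->
  forall s, is_facet (del [set x; w] (matching_complex g)) s ->
            is_facet (matching_complex g) s.
Proof.
move=> sym irr gxw gxl lf lw s /andP[]; rewrite inE => /andP[sK ns] /forall_inP mx.
have xw : x != w by apply: contraTneq gxw => ->; rewrite irr.
have xl : x != l by apply: contraTneq gxl => ->; rewrite irr.
rewrite /is_facet sK /=; apply/forall_inP => t tK; apply/implyP => st.
case: (boolP ([set x; w] \in t)) => ft; last first.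
  by have := mx t; rewrite inE tK ft => /(_ isT); rewrite st.
have [e es xe] : exists2 e, e \in s & x \in e.
  case: (boolP [exists e in s, x \in e]) => [/exists_inP[e ??]|nex]; first by exists e.
  have elK : [set x; l] |: s \in del [set x; w] (matching_complex g).
    rewrite inE; apply/andP; split; last first.
      by rewrite !inE negb_or ns andbT eq_sym set2_eq // !eqxx (negbTE lw) (negbTE xw).
    case/inM: sK => H1 H2; apply/inM; split.
      by move=> e; rewrite !inE => /orP[/eqP->|/H1//]; apply: edge_of.
    have noe : forall z e, e \in s -> z \in [set x; l] -> z \in e -> False.
      move=> z e es; rewrite !inE => /orP[]/eqP-> ze.
        by move/exists_inP: nex; apply; exists e.
      have [y [gly E]] := edge_at sym (H1 e es) ze.
      have yx : y = x by apply: (leaf_uniq lf); rewrite // sym.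
      move/exists_inP: nex; apply; exists e => //; by rewrite E yx !inE eqxx orbT.
    move=> z e1 e2; rewrite !inE => /orP[/eqP->|e1s] /orP[/eqP->|e2s] //.
    + by move=> h1 h2; case: (noe z e2).
    + by move=> h1 h2; case: (noe z e1).
    + exact: H2.
  have := mx _ elK; rewrite subsetUr => /eqP E.
  move/exists_inP: nex; case; exists [set x; l]; last by rewrite !inE eqxx.
  by rewrite -E !inE eqxx.
case/inM: tK => _ H2.
have E : e = [set x; w] by apply: (H2 x) => //; [exact: (subsetP st) | rewrite !inE eqxx].
by move: ns; rewrite -E es.
Qed.

Lemma base (T : finType) (g : rel T) : symmetric g ->
  (forall z, degree g z <= 1) -> vertex_decomposable (matching_complex g).
Proof.
move=> sym H; apply: vd_simplex; exists [set e | is_edge g e].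
apply/setP => s; rewrite powersetE; apply/idP/subsetP.
  by case/inM => H1 _ e es; rewrite inE H1.
move=> Hs; apply/inM; split; first by move=> e /Hs; rewrite inE.
move=> z e1 e2 /Hs; rewrite inE => h1 /Hs; rewrite inE => h2 z1 z2.
have [y1 [g1 ->]] := edge_at sym h1 z1.
have [y2 [g2 ->]] := edge_at sym h2 z2.
have := H z; rewrite /degree => /card_le1_eqP E.
by rewrite (E y1 y2) // inE.
Qed.

Definition PW (T : finType) (g : rel T) : Prop :=
  forall z, 1 < degree g z -> exists l, g z l && is_leaf g l.

Lemma not_xw (T : finType) (g : rel T) x w z l' :
  symmetric g -> g x w -> 1 < degree g x ->
  z != x -> g z l' -> is_leaf g l' -> (l' != x) && (l' != w).
Proof.
move=> sym gxw dx zx gzl lf; apply/andP; split.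
  by apply: contraTneq lf => ->; rewrite /is_leaf; case: (degree g x) dx => [|[]].
apply: contraNneq zx => E; rewrite E in lf.
by apply/eqP; apply: (leaf_uniq lf); rewrite sym // -E.
Qed.

Lemma deg_sub (T : finType) (g g' : rel T) z :
  (forall a b, g' a b -> g a b) -> degree g' z <= degree g z.
Proof.
move=> H; apply: subset_leq_card; apply/subsetP => y; rewrite !inE; exact: H.
Qed.

Lemma PW_del (T : finType) (g : rel T) x w l :
  symmetric g -> irreflexive g -> PW g -> g x w -> g x l -> is_leaf g l -> l != w ->
  1 < degree g x -> PW (gdel g x w).
Proof.
move=> sym irr P gxw gxl lf lw dx z dz.
have xw : x != w by apply: contraTneq gxw => ->; rewrite irr.
have degeq : forall a, a != x -> a != w -> degree (gdel g x w) a = degree g a.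
  move=> a ax aw; apply: eq_card => y; rewrite !inE /gdel (negbTE ax) (negbTE aw) /=.
  by rewrite andbT.
have dz' : 1 < degree g z.
  by apply: leq_trans dz _; apply: deg_sub => a b /andP[].
case: (eqVneq z x) => [->|zx].
  exists l; rewrite /is_leaf degeq //; last by apply: contraTneq gxl => ->; rewrite irr.
  by rewrite /gdel gxl eqxx (negbTE lw) (negbTE xw).
have [l' /andP[gzl lf']] := P z dz'.
have /andP[lx lw'] := not_xw sym gxw dx zx gzl lf'.
exists l'; rewrite /is_leaf degeq // /gdel gzl (negbTE zx) (negbTE lx) /=.
by rewrite andbF.
Qed.

Lemma PW_lk (T : finType) (g : rel T) x w :
  symmetric g -> irreflexive g -> PW g -> g x w ->
  1 < degree g x -> PW (glk g x w).
Proof.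
move=> sym irr P gxw dx z dz.
have [y [_ [+ _ _]]] := card_gt1P dz; rewrite !inE /glk => /and3P[_ zxw _].
have dz' : 1 < degree g z.
  by apply: leq_trans dz _; apply: deg_sub => a b /andP[].
move: zxw; rewrite !inE negb_or => /andP[zx zw].
have [l' /andP[gzl lf']] := P z dz'.
have /andP[lx lw'] := not_xw sym gxw dx zx gzl lf'.
exists l'; apply/andP; split.
  by rewrite /glk gzl !inE !negb_or zx zw lx lw'.
rewrite /is_leaf -(eqP lf'); apply/eqP; apply: eq_card => a; rewrite !inE /glk.
rewrite ?inE !negb_or lx lw' /=; apply/idP/idP => [/andP[]//|gla].
have az : a = z by apply: (leaf_uniq lf'); rewrite // sym.
by rewrite gla az zx zw.
Qed.

Definition ecount (T : finType) (g : rel T) := #|[set p : T * T | g p.1 p.2]|.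

Lemma ecount_lt (T : finType) (g g' : rel T) x w :
  (forall a b, g' a b -> g a b) -> g x w -> ~~ g' x w -> ecount g' < ecount g.
Proof.
move=> H gxw ng; apply: proper_card; apply/properP; split.
  by apply/subsetP => p; rewrite !inE; apply: H.
by exists (x, w); rewrite inE.
Qed.

Lemma step (T : finType) (g : rel T)
  (IH : forall g' : rel T, ecount g' < ecount g -> symmetric g' -> irreflexive g' -> PW g' ->
        vertex_decomposable (matching_complex g')) :
  symmetric g -> irreflexive g -> PW g -> vertex_decomposable (matching_complex g).
Proof.
move=> sym irr P.
case: (boolP [exists z, 1 < degree g z]); last first.
  move=> /existsPn H; apply: base => // z; by rewrite leqNgt H.
case/existsP => x dx.
have [l /andP[gxl lf]] := P x dx.
have [w [gxw lw]] : exists w, g x w /\ l != w.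
  have [a [b [ha hb ab]]] := card_gt1P dx; rewrite !inE in ha hb.
  case: (eqVneq l a) => [la|la]; last by exists a.
  by exists b; split=> //; rewrite la.
have xw : x != w by apply: contraTneq gxw => ->; rewrite irr.
apply: (@vd_shed _ _ [set x; w]).
- apply/inM; split; first by move=> e; rewrite inE => /eqP->; apply: edge_of.
  by move=> z e1 e2; rewrite !inE => /eqP-> /eqP->.
- rewrite lk_eq //; apply: IH.
  + apply: (ecount_lt (x:=x) (w:=w)) => //.
      by move=> a b /and3P[].
    by rewrite /glk /= !inE eqxx /= andbF.
  + by move=> a b; rewrite /glk /= sym; case: (a \in _); case: (b \in _); rewrite ?andbF.
  + by move=> a; rewrite /glk irr.
  + exact: PW_lk.
- rewrite del_eq //; apply: IH.
  + apply: (ecount_lt (x:=x) (w:=w)) => //.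
      by move=> a b /andP[].
    by rewrite /gdel /= !eqxx /= andbF.
  + move=> a b; rewrite /gdel /= sym; congr (_ && ~~ _).
    by rewrite orbC !(andbC (b == _)).
  + by move=> a; rewrite /gdel irr.
  + exact: (PW_del (l:=l)).
- exact: (facet_ok (l:=l)).
Qed.

Lemma main (T : finType) n : forall g : rel T, ecount g <= n ->
  symmetric g -> irreflexive g -> PW g -> vertex_decomposable (matching_complex g).
Proof.
elim: n => [|n IH] g cg; apply: step => g' lt.
  by move: (leq_trans lt cg).
apply: IH; rewrite -ltnS; exact: leq_trans lt cg.
Qed.

Theorem corollary3p3 (T : finType) (g : rel T) :
  simple_graph g -> fully_whiskered g ->
  vertex_decomposable (matching_complex g).
Proof.
case=> sym irr fw; apply: (main (n := ecount g)) => // z dz.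
by apply: fw; rewrite neq_ltn dz orbT.
Qed.
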